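(* For a restless bandit and a family $\mathcal F\subseteq2^{N^{\{0,1\}}}$ as in the context, suppose $w^S_j>0$ for all $S\in\mathcal F$ and $j\in N^{\{0,1\}}$. Then for every $S\in\mathcal F$ and $j\in S$, with vectors indexed by $N$: (a) $\mathbf v^{S\setminus\{j\}}-\mathbf v^S=\dfrac{c^S_j}{w^S_j}\,(\mathbf b^S-\mathbf b^{S\setminus\{j\}})=\dfrac{c^{S\setminus\{j\}}_j}{w^{S\setminus\{j\}}_j}\,(\mathbf b^S-\mathbf b^{S\setminus\{j\}})$; (b) $\dfrac{c^S_j}{w^S_j}=\dfrac{c^{S\setminus\{j\}}_j}{w^{S\setminus\{j\}}_j}$; (c) $\mathbf c^S-\mathbf c^{S\setminus\{j\}}=\dfrac{c^S_j}{w^S_j}\,(\mathbf w^S-\mathbf w^{S\setminus\{j\}})$.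
   Context: Restless bandit: finite state space $N=N^{\{0,1\}}\cup N^{\{1\}}$ (disjoint); actions $a\in\{0,1\}$; one-period costs $h^a_i$; transition probabilities $p^a_{ij}$, with $p^1_{ij}=p^0_{ij}$ and $h^1_i=h^0_i$ for $i\in N^{\{1\}}$; discount factor $\beta\in(0,1)$; activity weights $\theta^1_j>0$. For $S\subseteq N^{\{0,1\}}$ the $S$-active policy is active on $S\cup N^{\{1\}}$ and passive elsewhere; under it, from $X(0)=i$: $v^S_i=E_i[\sum_{t\ge0}h^{a(t)}_{X(t)}\beta^t]$, $b^S_i=E_i[\sum_{t\ge0}\theta^1_{X(t)}a(t)\beta^t]$; $\mathbf v^S=(v^S_i)_{i\in N}$, $\mathbf b^S=(b^S_i)_{i\in N}$. Marginal workloads $w^S_i=\theta^1_i1\{i\in N^{\{0,1\}}\}+\beta\sum_j(p^1_{ij}-p^0_{ij})b^S_j$, marginal costs $c^S_i=h^0_i-h^1_i+\beta\sum_j(p^0_{ij}-p^1_{ij})v^S_j$, $\mathbf w^S=(w^S_i)_{i\in N}$, $\mathbf c^S=(c^S_i)_{i\in N}$. *)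

(* Defs.v *)
From HB Require Import structures.
From mathcomp Require Import all_boot all_order all_algebra.
From mathcomp Require Import all_classical all_reals all_analysis.
Set Implicit Arguments. Unset Strict Implicit. Unset Printing Implicit Defensive.
Import Order.TTheory GRing.Theory Num.Theory.
Local Open Scope ring_scope.

(* N01 : {set 'I_n} is N^{0,1}; its complement ~: N01 is N^{1}.
   P0, P1 : passive / active transition matrices, h0, h1 : passive / active
   one-period costs, theta : activity weights theta^1, beta : discount factor. *)
Section Bandit.
Variables (R : realType) (n : nat) (N01 : {set 'I_n})
  (P0 P1 : 'M[R]_n) (h0 h1 : 'I_n -> R) (theta : 'I_n -> R) (beta : R).

Definition stochastic (P : 'M[R]_n) : Prop :=
  (forall i j, 0 <= P i j) /\ (forall i, \sum_(j < n) P i j = 1).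

Definition bandit_model : Prop :=
  [/\ stochastic P0, stochastic P1,
      (forall i j, i \notin N01 -> P1 i j = P0 i j),
      (forall i, i \notin N01 -> h1 i = h0 i) &
      (forall j, 0 < theta j) /\ (0 < beta < 1)].

Definition active (S : {set 'I_n}) (i : 'I_n) : bool := (i \in S) || (i \notin N01).

Definition PS (S : {set 'I_n}) : 'M[R]_n :=
  \matrix_(i, j) (if active S i then P1 i j else P0 i j).

Definition hS (S : {set 'I_n}) : 'cV[R]_n :=
  \col_i (if active S i then h1 i else h0 i).
Definition thS (S : {set 'I_n}) : 'cV[R]_n :=
  \col_i (if active S i then theta i else 0).

(* E_i[ sum_{t>=0} f(X(t)) beta^t ] under the S-active policy:
   E_i[f(X(t))] = ((PS S)^t f)_i, and the infinite sum is the limit of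
   partial sums *)
Definition disc_total (S : {set 'I_n}) (f : 'cV[R]_n) (i : 'I_n) : R :=
  limn (fun N : nat => \sum_(t < N) (beta ^+ t * (((PS S) ^+ t *m f) i ord0))).

Definition v (S : {set 'I_n}) (i : 'I_n) : R := disc_total S (hS S) i.
Definition b (S : {set 'I_n}) (i : 'I_n) : R := disc_total S (thS S) i.

Definition w (S : {set 'I_n}) (i : 'I_n) : R :=
  theta i * (i \in N01)%:R + beta * \sum_(j < n) (P1 i j - P0 i j) * b S j.
Definition c (S : {set 'I_n}) (i : 'I_n) : R :=
  h0 i - h1 i + beta * \sum_(j < n) (P0 i j - P1 i j) * v S j.

End Bandit.

(* Main.v *)
Set Warnings "-notation-overridden,-ambiguous-paths,-notation-incompatible-prefix".
Require Import Defs.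
From HB Require Import structures.
From mathcomp Require Import all_boot all_order all_algebra.
From mathcomp Require Import all_classical all_reals all_analysis.
From mathcomp Require Import ring lra.
Import Order.TTheory GRing.Theory Num.Theory.
Import numFieldNormedType.Exports.
Local Open Scope classical_set_scope.
Local Open Scope ring_scope.

Lemma partial_cvg (R : realType) (a : nat -> R) (M beta : R) :
  0 <= beta < 1 -> (forall t, `|a t| <= M) ->
  cvgn (fun N : nat => \sum_(t < N) beta ^+ t * a t).
Proof.
move=> /andP[b0 b1] aM.
have M0 : 0 <= M by apply: le_trans (aM 0%N).
have -> : (fun N : nat => \sum_(t < N) beta ^+ t * a t) = series (fun t => beta ^+ t * a t).
  by apply/funext => N; rewrite /series /= big_mkord.
apply: normed_cvg.
apply: (@series_le_cvg _ _ (geometric M beta)).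
- by move=> t; exact: normr_ge0.
- by move=> t; rewrite /geometric /= mulr_ge0 // exprn_ge0.
- move=> t; rewrite /geometric /= normrM (ger0_norm (exprn_ge0 _ b0)) mulrC.
  by apply: ler_wpM2r => //; rewrite exprn_ge0.
- by apply: is_cvg_geometric_series; rewrite ger0_norm.
Qed.

Section B.
Variables (R : realType) (n : nat).

Lemma stoch_bound (Q : 'M[R]_n) (y : 'cV[R]_n) (M : R) i :
  stochastic Q -> (forall k, `|y k ord0| <= M) -> `|(Q *m y) i ord0| <= M.
Proof.
move=> [Q0 Q1] yM; rewrite mxE.
apply: le_trans (ler_norm_sum _ _ _) _.
apply: le_trans (_ : \sum_k Q i k * M <= M).
  apply: ler_sum => k _; rewrite normrM ger0_norm //.
  by apply: ler_wpM2l.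
by rewrite -mulr_suml Q1 mul1r.
Qed.

Lemma pow_bound (Q : 'M[R]_n) (f : 'cV[R]_n) t i :
  stochastic Q -> `|((Q ^+ t) *m f) i ord0| <= \sum_k `|f k ord0|.
Proof.
move=> sQ; elim: t i => [|t IH] i.
  by rewrite expr0 mul1mx (bigD1 i) //= lerDl sumr_ge0.
by rewrite exprS -mulmxE -mulmxA; apply: stoch_bound.
Qed.
End B.

Lemma cvg_sum_seq (R : realType) (I : Type) (s : seq I) (g : I -> nat -> R) (l : I -> R) :
  (forall k, g k @ \oo --> l k) ->
  (fun N => \sum_(k <- s) g k N) @ \oo --> \sum_(k <- s) l k.
Proof.
move=> cg; elim: s => [|k s IH].
  rewrite big_nil; under eq_cvg do rewrite big_nil; exact: cvg_cst.
rewrite big_cons; under eq_cvg do rewrite big_cons.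
exact: cvgD.
Qed.

Lemma stoch_PS (R : realType) (n : nat) (N01 : {set 'I_n})
  (P0 P1 : 'M[R]_n) h0 h1 theta beta S :
  bandit_model N01 P0 P1 h0 h1 theta beta -> stochastic (PS N01 P0 P1 S).
Proof.
case=> [[P00 P01] [P10 P11] _ _ _]; split.
  by move=> i j; rewrite mxE; case: ifP.
move=> i; rewrite (eq_bigr (fun j => if active N01 S i then P1 i j else P0 i j)) ?(fun_if (fun F => \sum_j F j)); last by move=> j _; rewrite mxE.
by case: (active N01 S i).
Qed.

Lemma bellman (R : realType) (n : nat) (Q : 'M[R]_n) (f : 'cV[R]_n) (beta : R) i :
  stochastic Q -> 0 <= beta < 1 ->
  let u k N := \sum_(t < N) beta ^+ t * ((Q ^+ t *m f) k ord0) in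
  limn (u i) = f i ord0 + beta * \sum_k Q i k * limn (u k).
Proof.
move=> sQ hb u.
have cu k : cvgn (u k).
  by apply: (@partial_cvg _ (fun t => (Q ^+ t *m f) k ord0) (\sum_k `|f k ord0|) _ hb) => t; apply: pow_bound.
have equ N : u i N.+1 = f i ord0 + beta * \sum_k Q i k * u k N.
  rewrite /u big_ord_recl /= expr0 mul1r mul1mx; congr (_ + _).
  rewrite mulr_sumr; under [RHS]eq_bigr => k _ do rewrite mulr_sumr mulr_sumr.
  rewrite exchange_big /=; apply: eq_bigr => t _.
  rewrite /bump /= add1n !exprS -mulmxE -mulmxA mxE mulr_sumr.
  by apply: eq_bigr => k _; ring.
apply: cvg_lim => //.
rewrite -(cvg_shiftS (u i)).
have -> : [sequence u i N.+1]_N = (fun N => f i ord0 + beta * \sum_k Q i k * u k N).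
  by apply/funext => N; rewrite /= equ.
apply: cvgD; first exact: cvg_cst.
apply: cvgMl_tmp; apply: cvg_sum_seq => k.
by apply: cvgMl_tmp; apply: cu.
Qed.

Lemma uniq0 (R : realType) (n : nat) (Q : 'M[R]_n) (beta : R) (x : 'I_n -> R) :
  stochastic Q -> 0 <= beta < 1 ->
  (forall i, x i = beta * \sum_k Q i k * x k) -> forall i, x i = 0.
Proof.
move=> [Q0 Q1] /andP[b0 b1] hx i.
case: (@Order.TotalTheory.arg_maxP _ R 'I_n i xpredT (fun k => `|x k|) isT) => m _ Hm.
have H1 : `|\sum_k Q m k * x k| <= `|x m|.
  apply: le_trans (ler_norm_sum _ _ _) _.
  apply: le_trans (_ : \sum_k Q m k * `|x m| <= _).
    apply: ler_sum => k _; rewrite normrM ger0_norm //.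
    by apply: ler_wpM2l => //; apply: Hm.
  by rewrite -mulr_suml Q1 mul1r.
have H2 : `|x m| <= beta * `|x m|.
  by rewrite {1}hx normrM ger0_norm //; apply: ler_wpM2l.
have H3 : `|x m| = 0.
  have := normr_ge0 (x m); nra.
have := Hm i isT; rewrite H3 => /= H4.
by apply/eqP; rewrite -normr_le0.
Qed.

Section Diff.
Variables (R : realType) (n : nat) (N01 : {set 'I_n}) (P0 P1 : 'M[R]_n) (beta : R).
Variables (S T : {set 'I_n}) (j : 'I_n) (g1 g0 VS VT : 'I_n -> R).
Hypotheses (aST : forall i, i != j -> active N01 S i = active N01 T i)
  (aSj : active N01 S j) (aTj : ~~ active N01 T j)
  (HS : forall i, VS i = (if active N01 S i then g1 i else g0 i) + beta * \sum_k PS N01 P0 P1 S i k * VS k)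
  (HT : forall i, VT i = (if active N01 T i then g1 i else g0 i) + beta * \sum_k PS N01 P0 P1 T i k * VT k).

Lemma sumBmul (a c d : 'I_n -> R) :
  \sum_k a k * (c k - d k) = \sum_k a k * c k - \sum_k a k * d k.
Proof. by rewrite -sumrB; apply: eq_bigr => k _; rewrite mulrBr. Qed.

Lemma sumBmul2 (a c d : 'I_n -> R) :
  \sum_k (c k - d k) * a k = \sum_k c k * a k - \sum_k d k * a k.
Proof. by rewrite -sumrB; apply: eq_bigr => k _; rewrite mulrBl. Qed.

Lemma diffT i : VT i - VS i = (i == j)%:R * (g0 j - g1 j + beta * \sum_k (P0 j k - P1 j k) * VS k)
   + beta * \sum_k PS N01 P0 P1 T i k * (VT k - VS k).
Proof.
rewrite (HS i) (HT i); case: (eqVneq i j) => [-> | ne].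
  rewrite aSj (negbTE aTj) mul1r.
  have sS (F : 'I_n -> R) : \sum_k PS N01 P0 P1 S j k * F k = \sum_k P1 j k * F k.
    by apply: eq_bigr => k _; rewrite mxE aSj.
  have sT (F : 'I_n -> R) : \sum_k PS N01 P0 P1 T j k * F k = \sum_k P0 j k * F k.
    by apply: eq_bigr => k _; rewrite mxE (negbTE aTj).
  rewrite !sS !sT.
  rewrite sumBmul sumBmul2; ring.
rewrite mul0r add0r (aST i ne).
have sE (F : 'I_n -> R) : \sum_k PS N01 P0 P1 S i k * F k = \sum_k PS N01 P0 P1 T i k * F k.
  by apply: eq_bigr => k _; rewrite !mxE (aST i ne).
rewrite !sE.
rewrite sumBmul; ring.
Qed.

Lemma diffS i : VT i - VS i = (i == j)%:R * (g0 j - g1 j + beta * \sum_k (P0 j k - P1 j k) * VT k)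
   + beta * \sum_k PS N01 P0 P1 S i k * (VT k - VS k).
Proof.
rewrite (HS i) (HT i); case: (eqVneq i j) => [-> | ne].
  rewrite aSj (negbTE aTj) mul1r.
  have sS (F : 'I_n -> R) : \sum_k PS N01 P0 P1 S j k * F k = \sum_k P1 j k * F k.
    by apply: eq_bigr => k _; rewrite mxE aSj.
  have sT (F : 'I_n -> R) : \sum_k PS N01 P0 P1 T j k * F k = \sum_k P0 j k * F k.
    by apply: eq_bigr => k _; rewrite mxE (negbTE aTj).
  rewrite !sS !sT.
  rewrite sumBmul sumBmul2; ring.
rewrite mul0r add0r (aST i ne).
have sE (F : 'I_n -> R) : \sum_k PS N01 P0 P1 S i k * F k = \sum_k PS N01 P0 P1 T i k * F k.
  by apply: eq_bigr => k _; rewrite !mxE (aST i ne).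
rewrite !sE.
rewrite sumBmul; ring.
Qed.
End Diff.

Lemma comb (R : realType) (n : nat) (Q : 'M[R]_n) (beta : R) (d e : 'I_n -> R) (al ga r : R) j :
  stochastic Q -> 0 <= beta < 1 ->
  (forall i, d i = (i == j)%:R * al + beta * \sum_k Q i k * d k) ->
  (forall i, e i = (i == j)%:R * ga + beta * \sum_k Q i k * e k) ->
  al + r * ga = 0 -> forall i, d i + r * e i = 0.
Proof.
move=> sQ hb hd he hal.
have ha : al = - (r * ga) by rewrite -[al](addrK (r * ga)) hal sub0r.
apply: (@uniq0 _ _ Q beta (fun i => d i + r * e i) sQ hb) => i /=.
have key : \sum_k Q i k * (d k + r * e k) = \sum_k Q i k * d k + r * \sum_k Q i k * e k.
  by rewrite mulr_sumr -big_split; apply: eq_bigr => k _ /=; ring.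
rewrite key {1}(hd i) {1}(he i) ha; ring.
Qed.

Lemma cdiff (R : realType) (n : nat) (N01 : {set 'I_n})
  (P0 P1 : 'M[R]_n) (h0 h1 theta : 'I_n -> R) (beta : R) S T r :
  (forall k, v N01 P0 P1 h0 h1 beta T k - v N01 P0 P1 h0 h1 beta S k
     = r * (b N01 P0 P1 theta beta S k - b N01 P0 P1 theta beta T k)) ->
  forall i, c N01 P0 P1 h0 h1 beta S i - c N01 P0 P1 h0 h1 beta T i
    = r * (w N01 P0 P1 theta beta S i - w N01 P0 P1 theta beta T i).
Proof.
move=> H i; rewrite /c /w.
set vS := v N01 P0 P1 h0 h1 beta S; set vT := v N01 P0 P1 h0 h1 beta T.
set bS := b N01 P0 P1 theta beta S; set bT := b N01 P0 P1 theta beta T.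
have key : \sum_k (P0 i k - P1 i k) * vS k = \sum_k (P0 i k - P1 i k) * vT k
   + r * (\sum_k (P1 i k - P0 i k) * bS k - \sum_k (P1 i k - P0 i k) * bT k).
  rewrite -sumrB mulr_sumr -big_split; apply: eq_bigr => k _ /=.
  have hk : vT k = r * (bS k - bT k) + vS k by apply/eqP; rewrite -subr_eq; apply/eqP; apply: H.
  rewrite hk; ring.
rewrite key; ring.
Qed.

Local Close Scope classical_set_scope.

Theorem proposition7 (R : realType) (n : nat) (N01 : {set 'I_n})
  (P0 P1 : 'M[R]_n) (h0 h1 theta : 'I_n -> R) (beta : R)
  (F : {set {set 'I_n}}) :
  bandit_model N01 P0 P1 h0 h1 theta beta ->
  (forall S, S \in F -> S \subset N01) ->
  (forall S, S \in F -> forall j, j \in N01 ->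
     0 < w N01 P0 P1 theta beta S j) ->
  forall S, S \in F -> forall j, j \in S ->
  let vv := v N01 P0 P1 h0 h1 beta in
  let bb := b N01 P0 P1 theta beta in
  let ww := w N01 P0 P1 theta beta in
  let cc := c N01 P0 P1 h0 h1 beta in
  let Sj := S :\ j in
  [/\ (* (a) *)
      (forall i, vv Sj i - vv S i = cc S j / ww S j * (bb S i - bb Sj i)) /\
      (forall i, cc S j / ww S j * (bb S i - bb Sj i)
                 = cc Sj j / ww Sj j * (bb S i - bb Sj i)),
      (* (b) *)
      cc S j / ww S j = cc Sj j / ww Sj j &
      (* (c) *)
      (forall i, cc S i - cc Sj i = cc S j / ww S j * (ww S i - ww Sj i))].
Proof.
move=> hm hsub hpos S SF j jS vv bb ww cc Sj.
have hb : 0 <= beta < 1.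
  by case: hm => _ _ _ _ [_ /andP[b0 b1]]; rewrite b1 ltW.
have jN : j \in N01 by move/fintype.subsetP: (hsub S SF); apply.
have aSj : active N01 S j by rewrite /active jS.
have aTj : ~~ active N01 Sj j by rewrite /active !inE eqxx /= jN.
have aST i : i != j -> active N01 S i = active N01 Sj i by move=> ne; rewrite /active !inE ne.
have sQ X : stochastic (PS N01 P0 P1 X) := @stoch_PS _ _ N01 P0 P1 h0 h1 theta beta X hm.
have vB X i : vv X i = (if active N01 X i then h1 i else h0 i)
    + beta * \sum_k PS N01 P0 P1 X i k * vv X k.
  by have := @bellman _ _ _ (hS N01 h0 h1 X) _ i (sQ X) hb; rewrite /vv /v /disc_total /= => ->; rewrite /hS mxE.
have bB X i : bb X i = (if active N01 X i then theta i else (fun _ => 0) i)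
    + beta * \sum_k PS N01 P0 P1 X i k * bb X k.
  by have := @bellman _ _ _ (thS N01 theta X) _ i (sQ X) hb; rewrite /bb /b /disc_total /= => ->; rewrite /thS mxE.
have d1 := @diffT _ _ _ _ _ _ _ _ _ _ _ _ _ aST aSj aTj (vB S) (vB Sj).
have d2 := @diffS _ _ _ _ _ _ _ _ _ _ _ _ _ aST aSj aTj (vB S) (vB Sj).
have e1 := @diffT _ _ _ _ _ _ _ _ _ _ _ _ _ aST aSj aTj (bB S) (bB Sj).
have e2 := @diffS _ _ _ _ _ _ _ _ _ _ _ _ _ aST aSj aTj (bB S) (bB Sj).
have wneg X : 0 - theta j + beta * \sum_k (P0 j k - P1 j k) * bb X k = - ww X j.
  rewrite /ww /w jN mulr1 sumBmul2 sumBmul2; ring.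
have wS : 0 < ww S j := hpos S SF j jN.
have e1' i : bb Sj i - bb S i = (i == j)%:R * (- ww S j)
    + beta * \sum_k PS N01 P0 P1 Sj i k * (bb Sj k - bb S k) by rewrite e1 wneg.
have e2' i : bb Sj i - bb S i = (i == j)%:R * (- ww Sj j)
    + beta * \sum_k PS N01 P0 P1 S i k * (bb Sj k - bb S k) by rewrite e2 wneg.
have c1 : cc S j + (cc S j / ww S j) * - ww S j = 0.
  by rewrite mulrN divfK ?subrr // gt_eqF.
have A1 := @comb _ _ _ _ _ _ _ _ (cc S j / ww S j) _ (sQ Sj) hb d1 e1' c1.
have ha i : vv Sj i - vv S i = cc S j / ww S j * (bb S i - bb Sj i).
  have H := A1 i; rewrite -[LHS]subr0 -H /=; ring.
have enz : exists k, bb Sj k - bb S k != 0.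
  case: (boolP [exists k, bb Sj k - bb S k != 0]) => [/existsP // | /existsPn H0].
  exfalso.
  have Hz k : bb Sj k - bb S k = 0 by apply/eqP; move: (H0 k); rewrite negbK.
  have := e1' j; rewrite Hz eqxx mul1r big1 ?mulr0 ?addr0; last by move=> k _; rewrite Hz mulr0.
  by move=> /esym /eqP; rewrite oppr_eq0 (gt_eqF wS).
have wT : ww Sj j != 0.
  apply/negP => /eqP w0.
  have c0 : - ww Sj j + 0 * - ww Sj j = 0 by rewrite w0 oppr0 mul0r addr0.
  have A0 := @comb _ _ _ _ _ _ _ _ 0 _ (sQ S) hb e2' e2' c0.
  case: enz => k; have := A0 k; rewrite mul0r addr0 => ->; by rewrite eqxx.
have c2 : cc Sj j + (cc Sj j / ww Sj j) * - ww Sj j = 0.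
  by rewrite mulrN divfK ?subrr.
have A2 := @comb _ _ _ _ _ _ _ _ (cc Sj j / ww Sj j) _ (sQ S) hb d2 e2' c2.
have hb' i : vv Sj i - vv S i = cc Sj j / ww Sj j * (bb S i - bb Sj i).
  have H := A2 i; rewrite -[LHS]subr0 -H /=; ring.
have rb : cc S j / ww S j = cc Sj j / ww Sj j.
  case: enz => k hk.
  have hy : bb S k - bb Sj k != 0 by rewrite -oppr_eq0 opprB.
  by apply: (mulIf hy); rewrite -ha -hb'.
split => //.
  by split => i //; rewrite rb.
exact: (@cdiff _ _ _ _ _ _ _ _ _ S Sj _ ha).
Qed.
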